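(* For every $\varepsilon\in(0,1/4)$ and every $k\ge \varepsilon^{-1}$, any (possibly randomized) two-player protocol for Max-Card-$k$ (in the two-player model described in the context) with an approximation guarantee of $\frac{2}{3}+\varepsilon$ must have communication complexity $\Omega\!\left(\frac{N\varepsilon}{k}\right)$ bits, where $N=|W|$ is the size of the ground set.
   Context: Two-player model for Max-Card-$k$. The global information known to both players consists of a positive integer $k$, a finite ground set $W$, and a partition $W=W_A\,\dot\cup\, W_B$. Alice privately receives a set $V_A\subseteq W_A$ and Bob privately receives a set $V_B\subseteq W_B$. There is a non-negative, monotone, submodular function $f:2^W\to\mathbb{R}_{\ge 0}$; Alice can query $f$ (via a value oracle) only on subsets of $W_A$ (in particular she may query sets of size larger than $k$), while Bob can query $f$ on any subset of $W$. A protocol consists of two possibly randomized algorithms: Alice's algorithm computes a message $m$ (a bit string) from the global information, $V_A$ and her oracle; then Bob's algorithm computes an output set $S\subseteq V_A\cup V_B$ with $|S|\le k$ from the global information, $V_B$, $m$ and his oracle. The communication complexity is the maximum length in bits of $m$ over all inputs and the randomness. The protocol has approximation guarantee $\rho$ if for every instance $\mathbb{E}[f(S)]\ge \rho\cdot\max\{f(T): T\subseteq V_A\cup V_B,\ |T|\le k\}$. *)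

(* Defs.v *)
From HB Require Import structures.
From mathcomp Require Import all_boot all_order all_algebra.
From mathcomp Require Import reals.
Set Implicit Arguments. Unset Strict Implicit. Unset Printing Implicit Defensive.
Import Order.TTheory GRing.Theory Num.Theory.
Local Open Scope ring_scope.

(* Ground set W = 'I_N; W_A is a set, W_B := ~: W_A (complement). *)

Section MaxCardK.
Variables (R : realType) (N : nat).
Local Notation setW := {set 'I_N}.

Definition nonneg_setfun (f : setW -> R) := forall A : setW, 0 <= f A.
Definition monotone_setfun (f : setW -> R) :=
  forall A B : setW, A \subset B -> f A <= f B.
Definition submodular_setfun (f : setW -> R) :=
  forall A B : setW, f (A :|: B) + f (A :&: B) <= f A + f B.
Definition admissible_f (f : setW -> R) :=
  [/\ nonneg_setfun f, monotone_setfun f & submodular_setfun f].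

Definition valid_input (WA VA VB : setW) (f : setW -> R) :=
  [/\ VA \subset WA, VB \subset ~: WA & admissible_f f].

Definition is_distr (Omega : finType) (p : Omega -> R) :=
  (forall w, 0 <= p w) /\ \sum_(w : Omega) p w = 1.

(* Since oracle queries are
   unrestricted in number, Alice's algorithm is a function of V_A, the oracle
   (restricted, see [protocol_wf]) and her random seed; Bob's algorithm is a
   function of V_B, the message, the full oracle and his random seed. *)
Record protocol := Protocol {
  OmegaA : finType;
  pA : OmegaA -> R;
  OmegaB : finType;
  pB : OmegaB -> R;
  alice : setW -> (setW -> R) -> OmegaA -> seq bool;
  bob : setW -> seq bool -> (setW -> R) -> OmegaB -> setW }.

Definition bob_output (P : protocol) VA VB f (rA : OmegaA P) (rB : OmegaB P) :=
  bob VB (alice VA f rA) f rB.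

Definition protocol_wf (k : nat) (WA : setW) (P : protocol) :=
  [/\ is_distr (@pA P), is_distr (@pB P),
   (* Alice may only query f on subsets of W_A *)
   (forall (VA : setW) (f g : setW -> R) (rA : OmegaA P), VA \subset WA -> admissible_f f -> admissible_f g ->
      (forall T : setW, T \subset WA -> f T = g T) -> alice VA f rA = alice VA g rA) &
   (forall (VA VB : setW) (f : setW -> R) (rA : OmegaA P) (rB : OmegaB P), valid_input WA VA VB f -> 0 < pA rA -> 0 < pB rB ->
      bob_output VA VB f rA rB \subset VA :|: VB /\
      (#|bob_output VA VB f rA rB| <= k)%N)].

Definition expected_value (P : protocol) VA VB (f : setW -> R) : R :=
  \sum_(rA : OmegaA P) \sum_(rB : OmegaB P)
     pA rA * pB rB * f (bob_output VA VB f rA rB).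

Definition approx_guarantee (k : nat) (WA : setW) (P : protocol) (rho : R) :=
  forall (VA VB : setW) f, valid_input WA VA VB f ->
    forall T : setW, T \subset VA :|: VB -> (#|T| <= k)%N ->
      rho * f T <= expected_value P VA VB f.

Definition comm_at_most (WA : setW) (P : protocol) (L : nat) :=
  forall (VA : setW) (f : setW -> R) (rA : OmegaA P), VA \subset WA -> admissible_f f -> 0 < pA rA ->
    (size (alice VA f rA) <= L)%N.

End MaxCardK.

(* Main.v *)
Require Import Defs.
From HB Require Import structures.
From mathcomp Require Import all_boot all_order all_algebra.
From mathcomp Require Import reals.
From mathcomp Require Import ring lra zify.
Set Implicit Arguments. Unset Strict Implicit. Unset Printing Implicit Defensive.
Import Order.TTheory GRing.Theory Num.Theory.
Local Open Scope ring_scope.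
Local Close Scope ring_scope.
Section CountFun.
Variable r : nat.
Local Open Scope nat_scope.

Definition gg (n : nat) : nat :=
  if n < r then 5*r+1 else if n < 3*r then 6*r - 2*n else 0.
Definition ph (p i : nat) : nat :=
  if r <= p then 0 else
  if i < r - p then 2*r - p else
  if i <= 2*r then 2*(r - p) else
  if i <= 3*r - p then 2*((3*r - p) - i) else 0.
Definition GG (n : nat) : nat := \sum_(i < n) gg i.
Definition beta := 2*r*(2*r+1).
Definition CC := 9*r*r + 3*r.
Definition SS (p q : nat) : nat := \sum_(i < q) ph p i.
Definition FF (p q : nat) : nat := beta + GG (minn p r) + SS p q.
Definition Dl (p q : nat) : nat :=
  if r <= p then 0 else if q < r - p then 5*r+1 - q else 6*r - 2*(p+q).

Lemma GGS n : GG n.+1 = GG n + gg n.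
Proof. by rewrite /GG big_ord_recr. Qed.
Lemma SSS p q : SS p q.+1 = SS p q + ph p q.
Proof. by rewrite /SS big_ord_recr. Qed.
Lemma GG0 : GG 0 = 0. Proof. by rewrite /GG big_ord0. Qed.
Lemma SS0 p : SS p 0 = 0. Proof. by rewrite /SS big_ord0. Qed.

Lemma ggS n : gg n.+1 <= gg n.
Proof. rewrite /gg; repeat (case: ifP => ?); lia. Qed.
Lemma ph_i p i : ph p i.+1 <= ph p i.
Proof. rewrite /ph; repeat (case: ifP => ?); lia. Qed.
Lemma ph_p p i : ph p.+1 i <= ph p i.
Proof. rewrite /ph; repeat (case: ifP => ?); lia. Qed.
Lemma ph_g p i : ph p i <= gg (p + i).
Proof. rewrite /ph /gg; repeat (case: ifP => ?); lia. Qed.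

Lemma FFS p q : FF p.+1 q = FF p q + Dl p q.
Proof.
elim: q => [|q IH].
  rewrite /FF !SS0 !addn0 /Dl.
  have [hp|hp] := boolP (r <= p).
    have -> : minn p.+1 r = r by lia.
    have -> : minn p r = r by lia.
    by rewrite addn0.

  have -> : minn p.+1 r = p.+1 by lia.
  have -> : minn p r = p by lia.
  have hp' : p < r by lia.
  rewrite GGS /gg hp'.
  have -> : (0 < r - p) = true by lia.
  lia.
rewrite /FF !SSS !addnA -/(FF p.+1 q) IH /FF.
suff : Dl p q + ph p.+1 q = ph p q + Dl p q.+1 by lia.
rewrite /Dl /ph; repeat (case: ifP => ?); lia.
Qed.
End CountFun.
Section CountFun2.
Variable r : nat.
Local Open Scope nat_scope.
Local Notation gg := (gg r). Local Notation ph := (ph r). Local Notation GG := (GG r).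
Local Notation FF := (FF r). Local Notation SS := (SS r). Local Notation Dl := (Dl r).
Local Notation CC := (CC r). Local Notation beta := (beta r).

Lemma Dl_p p q : Dl p.+1 q <= Dl p q.
Proof. rewrite /Dl; repeat (case: ifP => ?); lia. Qed.
Lemma Dl_g p q : Dl p q <= gg (p + q).
Proof. rewrite /Dl /gg; repeat (case: ifP => ?); lia. Qed.

Definition GGc n := if n <= r then (5*r+1)*n else if n <= 3*r then
   r*(5*r+1) + (n-r)*(4*r+1-(n-r)) else CC.
Lemma GG_closed n : GG n = GGc n.
Proof.
elim: n => [|n IH]; first by rewrite GG0 /GGc leq0n muln0.
rewrite GGS IH /GGc /gg /CC; repeat (case: ifP => ?); nia.
Qed.

Lemma GG_mono m n : m <= n -> GG m <= GG n.
Proof.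
move=> h; rewrite -(subnKC h); elim: (n - m) => [|d IH]; first by rewrite addn0.
by rewrite addnS GGS (leq_trans IH) // leq_addr.
Qed.

Lemma GG_CC n : GG n <= CC.
Proof.
rewrite GG_closed /GGc /CC; repeat (case: ifP => ?); nia.
Qed.

Lemma GG_r : GG r = r*(5*r+1).
Proof. rewrite GG_closed /GGc leqnn; lia. Qed.
Lemma GG_r1 : 0 < r -> GG r.+1 = r*(5*r+1) + 4*r.
Proof.
move=> h; rewrite GG_closed /GGc.
have -> : (r.+1 <= r) = false by lia.
have -> : r.+1 <= 3*r by lia.
have -> : r.+1 - r = 1 by lia. lia.
Qed.

Lemma ph_big p i : r <= p -> ph p i = 0.
Proof. by rewrite /ph => ->. Qed.

Lemma FF_big p q : r <= p -> FF p q = CC.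
Proof.
move=> h; rewrite /FF /SS big1 ?addn0; last by move=> i _; rewrite ph_big.
have -> : minn p r = r by lia. rewrite GG_r /beta /CC; lia.
Qed.

Lemma FF_mono p p' q : p <= p' -> FF p q <= FF p' q.
Proof.
move=> h; rewrite -(subnKC h); elim: (p' - p) => [|d IH]; first by rewrite addn0.
by rewrite addnS FFS (leq_trans IH) // leq_addr.
Qed.

Lemma FF_CC p q : FF p q <= CC.
Proof.
case: (leqP r p) => h; first by rewrite FF_big.
by rewrite -(FF_big q (leqnn r)) FF_mono // ltnW.
Qed.

Lemma FF_G p q : GG (p + q) <= FF p q.
Proof.
case: (leqP r p) => h; first by rewrite FF_big // GG_CC.
suff H : forall d, d <= r -> GG (r - d + q) <= FF (r - d) q.
  have -> : p = r - (r - p) by lia. apply: H; lia.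
elim=> [|d IH] hd.
  by rewrite subn0 FF_big // GG_CC.
have e : r - d = (r - d.+1).+1 by lia.
move: (IH (ltnW hd)); rewrite e FFS addSn GGS => H.
have := Dl_g (r - d.+1) q. lia.
Qed.

Lemma FF0 q : q <= r -> FF 0 q = beta + 2*r*q.
Proof.
have E : forall q, FF 0 q = beta + SS 0 q.
  by move=> q'; rewrite /FF (_ : minn 0 r = 0) ?GG0 ?addn0 //; lia.
elim: q => [|q IH] hq; rewrite E.
  by rewrite SS0; lia.
rewrite SSS addnA -E IH; last lia.
rewrite /ph.
have -> : (r <= 0) = false by lia.
have -> : q < r - 0 by lia. lia.
Qed.

Lemma FF_r0 : FF r 0 = CC.
Proof. exact: FF_big. Qed.
End CountFun2.
Section SetFun.
Variables (R : realType) (T : finType) (A0 A1 : {set T}).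
Variable Psi : nat -> nat -> nat -> R.
Hypothesis dA : [disjoint A0 & A1].
Local Open Scope ring_scope.

Definition bump (i : nat) (x : nat * nat * nat) : nat * nat * nat :=
  let: (a, p, q) := x in
  match i with 0 => (a.+1, p, q) | 1 => (a, p.+1, q) | _ => (a, p, q.+1) end.
Definition Psi' (x : nat * nat * nat) : R := let: (a, p, q) := x in Psi a p q.
Definition typ (e : T) : nat := if e \in A0 then 0 else if e \in A1 then 1 else 2.
Definition cnt (S : {set T}) : nat * nat * nat :=
  (#|S :&: A0|, #|S :&: A1|, #|S :\: (A0 :|: A1)|)%N.
Definition sf (S : {set T}) : R := Psi' (cnt S).

Hypothesis Hmono : forall x i, Psi' x <= Psi' (bump i x).
Hypothesis Hdr : forall x i j,
  Psi' (bump j (bump i x)) - Psi' (bump j x) <= Psi' (bump i x) - Psi' x.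

Lemma bumpC i j x : bump i (bump j x) = bump j (bump i x).
Proof. by case: x => [[a p] q]; case: i => [|[|i]]; case: j => [|[|j]]. Qed.

Lemma cnt_add (e : T) (S : {set T}) : e \notin S -> cnt (e |: S) = bump (typ e) (cnt S).
Proof.
move=> eS; rewrite /cnt /typ !setIUl setDUl.
have c1 : forall B : {set T}, #|([set e] :&: B) :|: (S :&: B)| = ((e \in B) + #|S :&: B|)%N.
  move=> B; case: (boolP (e \in B)) => eB.
    rewrite (setIidPl _); last by rewrite sub1set.
    by rewrite cardsU1 inE (negbTE eS).
  have -> : [set e] :&: B = set0.
    by apply/setP=> y; rewrite !inE; apply/andP=> -[/eqP -> ]; rewrite (negbTE eB).
  by rewrite set0U.
have c2 : #|([set e] :\: (A0 :|: A1)) :|: (S :\: (A0 :|: A1))| =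
          ((e \notin A0 :|: A1) + #|S :\: (A0 :|: A1)|)%N.
  case: (boolP (e \in A0 :|: A1)) => eB.
    have -> : [set e] :\: (A0 :|: A1) = set0.
      by apply/setP=> y; rewrite !inE; apply/andP=> -[H /eqP Hy]; move: eB H; rewrite Hy inE => ->.
    by rewrite set0U.
  have -> : [set e] :\: (A0 :|: A1) = [set e].
    by apply/setP=> y; rewrite !inE; apply/andP/idP=> [[_ ->]//| /eqP ->]; split=> //; move: eB; rewrite inE.
  have eS' : e \notin S :\: (A0 :|: A1) by rewrite inE (negbTE eS) andbF.
  by rewrite cardsU1 eS'.
rewrite (c1 A0) (c1 A1) c2 !inE.
case: (boolP (e \in A0)) => e0 /=.
  have e1 : e \notin A1 by apply/negP=> e1; move/disjointFr: dA => /(_ e e0); rewrite e1.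
  by rewrite (negbTE e1).
by case: (boolP (e \in A1)).
Qed.

Lemma sf_add (e : T) (S : {set T}) : e \notin S -> sf (e |: S) = Psi' (bump (typ e) (cnt S)).
Proof. by move=> h; rewrite /sf cnt_add. Qed.

Lemma sf_local (S : {set T}) (e1 e2 : T) : e1 \notin S -> e2 \notin S -> e1 != e2 ->
  sf (e1 |: (e2 |: S)) - sf (e2 |: S) <= sf (e1 |: S) - sf S.
Proof.
move=> h1 h2 h12.
have h1' : e1 \notin e2 |: S by rewrite !inE negb_or h12.
rewrite (sf_add h1') (cnt_add h2) (sf_add h2) (sf_add h1) bumpC.
exact: Hdr.
Qed.

Lemma sf_marg (X Y : {set T}) (e : T) : X \subset Y -> e \notin Y ->
  sf (e |: Y) - sf Y <= sf (e |: X) - sf X.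
Proof.
move Hc : #|Y :\: X| => n; elim: n X Hc => [|n IH] X Hc hXY heY.
  have -> : Y = X.
    apply/eqP; rewrite eqEsubset hXY andbT; apply/subsetP=> y yY.
    apply/negPn/negP=> yX; move/eqP: Hc; rewrite cards_eq0 => /eqP/setP/(_ y).
    by rewrite !inE yX yY.
  by [].
have : (0 < #|Y :\: X|)%N by rewrite Hc.
case/card_gt0P=> y; rewrite inE => /andP[yX yY].
have hX' : y |: X \subset Y by rewrite subUset sub1set yY hXY.
have Hc' : #|Y :\: (y |: X)| = n.
  have : #|Y :\: X| = #|Y :\: (y |: X)|.+1.
    rewrite (cardsD1 y (Y :\: X)) !inE yX yY /=; congr (_.+1); apply: eq_card=> z.
    by rewrite !inE; case: (z == y); rewrite ?andbF ?andbT.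
  by rewrite Hc => -[].
apply: le_trans (IH _ Hc' hX' heY) _.
have eX : e \notin X by apply/negP=> eX; move/negP: heY; apply; move/subsetP: hXY; apply.
have ey : e != y by apply/eqP=> E; move: heY; rewrite E yY.
exact: sf_local.
Qed.

Lemma sf_submod (A B : {set T}) : sf (A :|: B) + sf (A :&: B) <= sf A + sf B.
Proof.
suff : sf (A :|: B) - sf A <= sf B - sf (A :&: B) by lra.
move Hc : #|B :\: A| => n; elim: n B Hc => [|n IH] B Hc.
  have BA : B \subset A.
    apply/subsetP=> y yB; apply/negPn/negP=> yA; move/eqP: Hc; rewrite cards_eq0 => /eqP/setP/(_ y).
    by rewrite !inE yA yB.
  by rewrite (setUidPl BA) (setIidPr BA) !subrr.
have : (0 < #|B :\: A|)%N by rewrite Hc.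
case/card_gt0P=> z; rewrite inE => /andP[zA zB].
set B' := B :\ z.
have Hc' : #|B' :\: A| = n.
  have : #|B :\: A| = #|B' :\: A|.+1.
    rewrite (cardsD1 z (B :\: A)) !inE zA zB /=; congr (_.+1); apply: eq_card=> w.
    by rewrite !inE; case: (w == z); rewrite ?andbF ?andbT.
  by rewrite Hc => -[].
have IH' := IH B' Hc'.
have eB : B = z |: B' by rewrite setD1K.
have eU : A :|: B = z |: (A :|: B') by rewrite eB setUCA.
have eI : A :&: B = A :&: B'.
  apply/setP=> w; rewrite !inE; case: (boolP (w == z)) => [/eqP ->|]; by rewrite ?(negbTE zA) ?andbT.
have zAB : z \notin A :|: B' by rewrite !inE negb_or zA eqxx.
have hs : B' \subset A :|: B' by apply: subsetUr.
have Hm := sf_marg hs zAB.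
rewrite eU eI; rewrite eB in Hm *.
move: Hm; rewrite -eB => Hm.
lra.
Qed.

Lemma sf_mono (A B : {set T}) : A \subset B -> sf A <= sf B.
Proof.
move Hc : #|B :\: A| => n; elim: n A Hc => [|n IH] A Hc hAB.
  have -> : B = A.
    apply/eqP; rewrite eqEsubset hAB andbT; apply/subsetP=> y yB.
    apply/negPn/negP=> yA; move/eqP: Hc; rewrite cards_eq0 => /eqP/setP/(_ y).
    by rewrite !inE yA yB.
  by [].
have : (0 < #|B :\: A|)%N by rewrite Hc.
case/card_gt0P=> y; rewrite inE => /andP[yA yB].
have hA' : y |: A \subset B by rewrite subUset sub1set yB hAB.
have Hc' : #|B :\: (y |: A)| = n.
  have : #|B :\: A| = #|B :\: (y |: A)|.+1.
    rewrite (cardsD1 y (B :\: A)) !inE yA yB /=; congr (_.+1); apply: eq_card=> z.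
    by rewrite !inE; case: (z == y); rewrite ?andbF ?andbT.
  by rewrite Hc => -[].
apply: le_trans (IH _ Hc' hA'); rewrite sf_add //; exact: Hmono.
Qed.
End SetFun.
Section PsiDef.
Variables (R : realType) (r : nat).
Hypothesis hr : (3 <= r)%N.
Local Open Scope ring_scope.

Definition PhiN (a p q : nat) : nat := if a == 0%N then GG r (p + q) else FF r p q.
Definition cinv : R := ((CC r)%:R)^-1.
Definition Psi (a p q : nat) : R := cinv * (PhiN a p q)%:R.
Definition PN (x : nat * nat * nat) : nat := let: (a, p, q) := x in PhiN a p q.

Lemma FFq p q : FF r p q.+1 = (FF r p q + ph r p q)%N.
Proof. by rewrite /FF SSS addnA. Qed.

Lemma PhiN_mono x i : (PN x <= PN (bump i x))%N.
Proof.
case: x => [[a p] q]; rewrite /PN /bump /PhiN.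
case: i => [|[|i]]; case: a => [|a] //=.
- exact: FF_G.
- by rewrite GG_mono // addSn.
- by rewrite FFS leq_addr.
- by rewrite GG_mono // addnS.
- by rewrite FFq leq_addr.
Qed.

Lemma PhiN_dr x i j :
  (PN (bump j (bump i x)) + PN x <= PN (bump i x) + PN (bump j x))%N.
Proof.
case: x => [[a p] q]; rewrite /PN /bump /PhiN.
have G2 : forall n, (GG r n.+2 + GG r n <= GG r n.+1 + GG r n.+1)%N.
  move=> n; rewrite !GGS; have := ggS r n; lia.
have f1 := FFS r p q; have f2 := FFq p q; have f3 := FFq p.+1 q.
have f4 := FFS r p q.+1; have f5 := FFS r p.+1 q; have f6 := FFq p q.+1.
have h1 := FF_G r p q; have h2 := Dl_g r p q; have h3 := ph_g r p q.
have h4 := Dl_p r p q; have h5 := ph_p r p q; have h6 := ph_i r p q.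
have h7 := G2 (p + q); have h8 := GG_mono r (leq_addr 1 (p + q)).
have h9 := FF_G r p.+1 q; have h10 := FF_G r p q.+1.
have g1 := GGS r (p + q); have g2 := GGS r (p + q).+1; have g3 := ggS r (p + q).
case: i => [|[|i]]; case: j => [|[|j]]; case: a => [|a] /=.
all: rewrite ?addSn ?addnS.
all: lia.
Qed.

Lemma CC_gt0 : (0 < CC r)%N.
Proof. rewrite /CC; lia. Qed.
Lemma cinv_ge0 : 0 <= cinv.
Proof. by rewrite /cinv invr_ge0 ler0n. Qed.

Lemma Psi_mono x i : Psi' Psi x <= Psi' Psi (bump i x).
Proof.
have := PhiN_mono x i; case: x => [[a p] q]; rewrite /Psi' /PN /Psi => h.
case: (bump i (a, p, q)) h => [[a' p'] q'] h.
by rewrite ler_wpM2l ?cinv_ge0 // ler_nat.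
Qed.

Lemma Psi_dr x i j :
  Psi' Psi (bump j (bump i x)) - Psi' Psi (bump j x) <= Psi' Psi (bump i x) - Psi' Psi x.
Proof.
have := PhiN_dr x i j.
have E : forall y, Psi' Psi y = cinv * (PN y)%:R by case=> [[a p] q].
rewrite !E -(ler_nat R) !natrD => h.
suff : cinv * ((PN (bump j (bump i x)))%:R + (PN x)%:R) <=
       cinv * ((PN (bump i x))%:R + (PN (bump j x))%:R) by rewrite !mulrDr; lra.
by rewrite ler_wpM2l ?cinv_ge0.
Qed.

Lemma Psi_le1 a p q : Psi a p q <= 1.
Proof.
rewrite /Psi /cinv /PhiN mulrC ler_pdivrMr ?ltr0n ?CC_gt0 // mul1r ler_nat.
by case: (a == 0%N); [exact: GG_CC | exact: FF_CC].
Qed.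

Lemma Psi_000 : Psi 0 0 0 = 0.
Proof. by rewrite /Psi /PhiN /= GG0 mulr0. Qed.

Lemma Psi_opt : Psi 1 r 0 = 1.
Proof. by rewrite /Psi /PhiN /= FF_r0 /cinv mulVf // pnatr_eq0 -lt0n CC_gt0. Qed.

Lemma Psi_alt a q : (a <= 1)%N -> (a + q <= r.+1)%N -> Psi a 0 q <= 2/3.
Proof.
move=> ha hq; rewrite /Psi /cinv /PhiN mulrC ler_pdivrMr ?ltr0n ?CC_gt0 //.
suff : (3 * (if a == 0%N then GG r (0 + q) else FF r 0 q) <= 2 * CC r)%N.
  rewrite -(ler_nat R) !natrM => h.
  have h3 : (0:R) < 3 by [].
  rewrite -(ler_pM2l h3) mulrA (_ : 3 * (2/3) = 2 :> R); last by lra.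
  exact: h.
have [a0|a0] := eqVneq a 0%N.
  have hq0 : (q <= r.+1)%N by lia.
  have := GG_mono r hq0; rewrite GG_r1; last lia.
  rewrite add0n /CC; nia.
have hqr : (q <= r)%N by lia.
rewrite FF0 //.
have := leq_mul (leqnn r) hqr.
rewrite /beta /CC; nia.
Qed.

Lemma Psi_alice p q : Psi 0 p q = cinv * (GG r (p + q))%:R.
Proof. by []. Qed.
End PsiDef.
Lemma divmod_uniq (r u u' t t' : nat) : (t < r)%N -> (t' < r)%N ->
  (u * r + t = u' * r + t')%N -> u = u' /\ t = t'.
Proof.
move=> ht ht' E.
have [h|h|h] := ltngtP u u'.
- have := leq_mul (h : u.+1 <= u')%N (leqnn r); rewrite mulSn; lia.
- have := leq_mul (h : u'.+1 <= u)%N (leqnn r); rewrite mulSn; lia.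
- by subst; split=> //; lia.
Qed.

Section Blocks.
Variables (N r n : nat).
Hypothesis hN : (2 * r * n < N)%N.

Definition eval (j : 'I_n) (c : bool) (t : 'I_r) : nat := (1 + (2 * j + c) * r + t)%N.
Lemma eval_lt j c t : (eval j c t < N)%N.
Proof.
rewrite /eval; have hj := ltn_ord j; have ht := ltn_ord t.
have : ((2 * j + c) * r + t < 2 * r * n)%N.
  have h1 : (2 * j + c < 2 * n)%N by case: c; lia.
  have := leq_mul (h1 : (2 * j + c).+1 <= 2 * n)%N (leqnn r); rewrite mulSn; lia.
lia.
Qed.
Definition elem j c t : 'I_N := Ordinal (eval_lt j c t).

Lemma elem_inj j c t j' c' t' : elem j c t = elem j' c' t' -> [/\ j = j', c = c' & t = t'].
Proof.
move/(congr1 val); rewrite /= /eval => E.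
have E' : ((2 * j + c) * r + t = (2 * j' + c') * r + t')%N by lia.
have [e1 e2] := divmod_uniq (ltn_ord t) (ltn_ord t') E'.
clear E E'; have [ej ec] : j = j' :> nat /\ c = c' by move: e1; case: c; case: c' => /=; lia.
by split=> //; apply: val_inj.
Qed.

Definition Rg (j : 'I_n) (c : bool) : {set 'I_N} := [set elem j c t | t : 'I_r].
Definition VAx (x : {ffun 'I_n -> bool}) : {set 'I_N} := \bigcup_(j : 'I_n) Rg j (x j).

Lemma card_Rg j c : #|Rg j c| = r.
Proof.
rewrite card_imset ?card_ord // => t t' /elem_inj [] //.
Qed.

Lemma elem_val j c t : (0 < val (elem j c t))%N.
Proof. by rewrite /= /eval. Qed.

Lemma Rg_val j c e : e \in Rg j c -> (0 < val e)%N.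
Proof. by case/imsetP=> t _ ->; apply: elem_val. Qed.

Lemma VAx_val (x : {ffun 'I_n -> bool}) e : e \in VAx x -> (0 < val e)%N.
Proof. by case/bigcupP=> j _; apply: Rg_val. Qed.

Lemma Rg_VAx (x : {ffun 'I_n -> bool}) j : Rg j (x j) \subset VAx x.
Proof. by apply/subsetP=> e he; apply/bigcupP; exists j. Qed.

Lemma Rg_agree (x x' : {ffun 'I_n -> bool}) j e : e \in Rg j (x j) -> e \in VAx x' -> x' j = x j.
Proof.
case/imsetP=> t _ -> /bigcupP[j' _ /imsetP[t' _ /elem_inj[ej ec _]]].
by subst j'.
Qed.
End Blocks.
Lemma cnt_sum (T : finType) (A0 A1 S : {set T}) : [disjoint A0 & A1] ->
  (#|S :&: A0| + #|S :&: A1| + #|S :\: (A0 :|: A1)| = #|S|)%N.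
Proof.
move=> dA; rewrite -(cardsID (A0 :|: A1) S) setIUr cardsU.
have -> : S :&: A0 :&: (S :&: A1) = set0.
  apply/setP=> y; rewrite !inE; apply/negbTE; apply/negP => /andP[/andP[_ y0] /andP[_ y1]].
  by move/disjointFr: dA => /(_ y y0); rewrite y1.
by rewrite cards0 subn0.
Qed.

Section Fun.
Variables (R : realType) (N r : nat) (b : 'I_N).
Hypothesis hr : (2 < r)%N.
Local Open Scope ring_scope.

Definition fR (S0 : {set 'I_N}) : {set 'I_N} -> R := sf [set b] S0 (Psi R r).

Lemma disj_b (S0 : {set 'I_N}) : b \notin S0 -> [disjoint [set b] & S0].
Proof.
move=> bS; apply/pred0P=> y /=; rewrite !inE; apply/negbTE/negP=> /andP[/eqP -> ].
by rewrite (negbTE bS).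
Qed.

Lemma fR_set0 (S0 : {set 'I_N}) : fR S0 set0 = 0.
Proof. by rewrite /fR /sf /cnt !set0I set0D !cards0 /= Psi_000. Qed.

Lemma fR_adm (S0 : {set 'I_N}) : b \notin S0 -> admissible_f (fR S0).
Proof.
move=> bS; have dA := disj_b bS.
have Hm := @Psi_mono R r; have Hd := @Psi_dr R r hr.
split.
- move=> A; rewrite -(fR_set0 S0); apply: (sf_mono dA Hm); exact: sub0set.
- by move=> A B hAB; apply: (sf_mono dA Hm).
- by move=> A B; apply: (sf_submod dA Hd).
Qed.

Lemma fR_WA (S0 T : {set 'I_N}) : b \notin S0 -> b \notin T -> fR S0 T = fR set0 T.
Proof.
move=> bS bT; rewrite /fR /sf /cnt /=.
have e0 : forall S1 : {set 'I_N}, #|T :&: [set b]| = 0%N.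
  move=> _; apply/eqP; rewrite cards_eq0; apply/eqP/setP=> y; rewrite !inE.
  by apply/negbTE/negP=> /andP[yT /eqP yb]; move: bT; rewrite -yb yT.
rewrite (e0 S0) setI0 cards0 /Psi /PhiN /=.
have h1 := cnt_sum T (disj_b bS); have h2 := cnt_sum T (@disj_b set0 (negbT (in_set0 b))).
rewrite (e0 S0) setI0 cards0 in h1 h2.
by rewrite -h1 in h2; rewrite h2.
Qed.

Lemma fR_le1 (S0 S : {set 'I_N}) : fR S0 S <= 1.
Proof. by rewrite /fR /sf; case: (cnt _ _ _) => [[a p] q]; apply: Psi_le1. Qed.

Lemma fR_opt (S0 : {set 'I_N}) : b \notin S0 -> #|S0| = r -> fR S0 (S0 :|: [set b]) = 1.
Proof.
move=> bS cS; rewrite /fR /sf /cnt /=.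
have -> : (S0 :|: [set b]) :&: [set b] = [set b].
  by apply/setP=> y; rewrite !inE; case: (y == b); rewrite ?orbT ?andbF.
have -> : (S0 :|: [set b]) :&: S0 = S0.
  by apply/setP=> y; rewrite !inE; case: (y \in S0); rewrite ?andbT ?andbF.
have -> : (S0 :|: [set b]) :\: ([set b] :|: S0) = set0.
  by apply/setP=> y; rewrite !inE; case: (y \in S0); case: (y == b).
by rewrite cards1 cS cards0 Psi_opt.
Qed.

Lemma fR_alt (S0 S : {set 'I_N}) : b \notin S0 -> [disjoint S & S0] -> (#|S| <= r.+1)%N -> fR S0 S <= 2/3.
Proof.
move=> bS dS cS; rewrite /fR /sf /cnt /=.
have h1 := cnt_sum S (disj_b bS).
have -> : S :&: S0 = set0.
  apply/setP=> y; rewrite !inE; apply/negbTE/negP=> /andP[yS yS0].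
  by move/disjointFr: dS => /(_ y yS); rewrite yS0.
rewrite cards0; rewrite (_ : S :&: S0 = set0) ?cards0 ?addn0 in h1; last first.
  apply/setP=> y; rewrite !inE; apply/negbTE/negP=> /andP[yS yS0].
  by move/disjointFr: dS => /(_ y yS); rewrite yS0.
apply: Psi_alt => //; last by rewrite h1.
have : (#|S :&: [set b]| <= #|[set b]|)%N by apply: subset_leq_card; apply: subsetIr.
by rewrite cards1.
Qed.
End Fun.
Lemma pad_inj (s1 s2 : seq bool) a1 a2 :
  s1 ++ true :: nseq a1 false = s2 ++ true :: nseq a2 false -> s1 = s2.
Proof.
move=> E.
have ha : a1 = a2.
  have := congr1 (fun s => index true (rev s)) E.
  rewrite !rev_cat !rev_cons !rev_nseq -!cats1 -!catA !index_cat !mem_nseq /= !andbF /=.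
  by rewrite !size_nseq !addn0.
subst a2.
have hs : size s1 = size s2.
  by have := congr1 size E; rewrite !size_cat /=; lia.
have := congr1 (take (size s1)) E.
by rewrite take_size_cat // hs take_size_cat.
Qed.

Section Counting.
Variables (n L h : nat).
Local Notation X := {ffun 'I_n -> bool}.
Variables (M : X -> seq bool) (H : X -> {set 'I_n}).
Hypothesis hM : forall x, (size (M x) <= L)%N.
Hypothesis hH : forall x, (h <= #|H x|)%N.
Hypothesis hF : forall x1 x2, M x1 = M x2 -> forall j, j \in H x1 -> x2 j = x1 j.

Definition t0 : (L.+1).-tuple bool := nseq_tuple L.+1 false.
Definition enc (s : seq bool) : (L.+1).-tuple bool :=
  insubd t0 (s ++ true :: nseq (L - size s) false).

Lemma enc_val s : (size s <= L)%N -> val (enc s) = s ++ true :: nseq (L - size s) false.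
Proof.
move=> hs; rewrite /enc insubdK //.
by rewrite unfold_in /= size_cat /= size_nseq; apply/eqP; lia.
Qed.

Lemma enc_inj x1 x2 : enc (M x1) = enc (M x2) -> M x1 = M x2.
Proof.
move/(congr1 val); rewrite !enc_val //; exact: pad_inj.
Qed.

Lemma enc_t0 x : enc (M x) != t0.
Proof.
apply/negP=> /eqP/(congr1 (fun t : (L.+1).-tuple bool => true \in val t)).
rewrite enc_val // mem_cat in_cons eqxx orbT /t0 /=.
by rewrite in_cons mem_nseq andbF.
Qed.

Lemma agree_card (x1 : X) (J : {set 'I_n}) :
  (#|[set x : X | [forall j in J, x j == x1 j]]| <= 2 ^ (n - #|J|))%N.
Proof.
pose sT := {j : 'I_n | j \notin J}.
pose g (x : X) : {ffun sT -> bool} := [ffun j => x (val j)].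
apply: (leq_trans (@leq_card_in _ _ g [set x : X | [forall j in J, x j == x1 j]] _)).
  move=> x x'; rewrite !inE => /forall_inP hx /forall_inP hx' /ffunP E.
  apply/ffunP=> j; case: (boolP (j \in J)) => hj.
    by rewrite (eqP (hx j hj)) (eqP (hx' j hj)).
  by have := E (exist _ j hj); rewrite !ffunE.
rewrite card_ffun card_bool card_sig.
have -> : #|[pred x | x \notin J]| = (n - #|J|)%N.
  have := cardsC J; rewrite card_ord => hc.
  have -> : #|[pred x | x \notin J]| = #|~: J| by apply: eq_card => j; rewrite !inE.
  lia.
by [].
Qed.

Lemma fiber_card (t : (L.+1).-tuple bool) :
  (#|[set x | enc (M x) == t]| <= 2 ^ (n - h))%N.
Proof.
case: (set_0Vmem [set x | enc (M x) == t]) => [->|[x1]]; first by rewrite cards0.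
rewrite inE => /eqP e1.
apply: (leq_trans (subset_leq_card (_ : _ \subset [set x : X | [forall j in H x1, x j == x1 j]]))).
  apply/subsetP=> x2; rewrite !inE => /eqP e2; apply/forall_inP=> j hj.
  by rewrite (hF (enc_inj (etrans e1 (esym e2))) hj).
apply: (leq_trans (agree_card x1 (H x1))).
by rewrite leq_pexp2l // leq_sub2l.
Qed.

Lemma count_bound : (h <= L)%N.
Proof.
have x0 : X := [ffun=> false].
have hn : (h <= n)%N.
  apply: (leq_trans (hH x0)); have := max_card (H x0); by rewrite card_ord.
have E : (\sum_(t : (L.+1).-tuple bool) #|[set x | enc (M x) == t]| = 2 ^ n)%N.
  have cX : #|{: X}| = (2 ^ n)%N by rewrite card_ffun card_bool card_ord.
  rewrite -cX -sum1_card.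
  rewrite (partition_big (fun x => enc (M x)) predT) //=.
  by apply: eq_bigr => t _; rewrite -sum1_card; apply: eq_bigl => x; rewrite !inE.
rewrite (bigD1 t0) //= in E.
have F0 : #|[set x | enc (M x) == t0]| = 0%N.
  apply/eqP; rewrite cards_eq0; apply/eqP/setP=> x; rewrite !inE.
  by apply/negbTE; apply: enc_t0.
rewrite F0 add0n in E.
have B : (2 ^ n <= (2 ^ L.+1).-1 * 2 ^ (n - h))%N.
  rewrite -E; apply: (@leq_trans (\sum_(t | t != t0) 2 ^ (n - h))%N).
    by apply: leq_sum => t _; apply: fiber_card.
  rewrite sum_nat_const; apply: leq_mul => //.
  have c1 := cardC1 t0; rewrite card_tuple card_bool in c1; rewrite -c1.
  by apply/eq_leq/eq_card => t; rewrite !inE.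
have e2 : (2 ^ n = 2 ^ h * 2 ^ (n - h))%N by rewrite -expnD subnKC.
rewrite e2 leq_pmul2r ?expn_gt0 // in B.
have : (2 ^ h < 2 ^ L.+1)%N by apply: (leq_ltn_trans B); rewrite prednK ?expn_gt0.
by rewrite ltn_exp2l.
Qed.
End Counting.
Section Main.
Variables (R : realType) (N r n : nat) (b : 'I_N).
Hypotheses (hr : (2 < r)%N) (hN : (2 * r * n < N)%N) (hb : val b = 0%N).
Local Open Scope ring_scope.
Local Notation WA := (~: [set b]).
Variables (P : protocol R N) (eps : R) (L : nat).
Hypotheses (heps : 0 < eps) (wf : protocol_wf r.+1 WA P)
  (ag : approx_guarantee r.+1 WA P (2 / 3 + eps)) (cm : comm_at_most WA P L).
Local Notation X := {ffun 'I_n -> bool}.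
Local Notation VA := (VAx hN).
Local Notation f0 := (fR R r b set0).

Definition Msg (x : X) (m : seq bool) : bool :=
  [exists rA : OmegaA P, (0 < pA rA) && (alice (VA x) f0 rA == m)].
Definition hit (x : X) (j : 'I_n) (rA : OmegaA P) : bool :=
  [forall x' : X, Msg x' (alice (VA x) f0 rA) ==> (x' j == x j)].

Lemma b_Rg j c : b \notin Rg hN j c.
Proof. by apply/negP=> /Rg_val; rewrite hb. Qed.
Lemma VA_WA x : VA x \subset WA.
Proof.
apply/subsetP=> e he; rewrite !inE; apply/negP=> /eqP eb.
by move: (VAx_val he); rewrite eb hb.
Qed.
Lemma b_WA (T : {set 'I_N}) : T \subset WA -> b \notin T.
Proof. by move/subsetP=> h; apply/negP=> /h; rewrite !inE eqxx. Qed.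
Lemma VB_ok : [set b] \subset ~: WA.
Proof. by rewrite setCK. Qed.

Lemma pA_ge0 (rA : OmegaA P) : 0 <= pA rA. Proof. by case: wf => -[h _] _ _ _; apply: h. Qed.
Lemma pB_ge0 (rB : OmegaB P) : 0 <= pB rB. Proof. by case: wf => _ -[h _] _ _; apply: h. Qed.
Lemma pA_sum : \sum_(rA : OmegaA P) pA rA = 1. Proof. by case: wf => -[_ h] _ _ _. Qed.
Lemma pB_sum : \sum_(rB : OmegaB P) pB rB = 1. Proof. by case: wf => _ -[_ h] _ _. Qed.

Lemma not_pos (y : R) : 0 <= y -> ~~ (0 < y) -> y = 0.
Proof. by move=> h1 h2; apply/eqP; rewrite eq_le h1 andbT leNgt. Qed.

Lemma claim1 (x : X) (j : 'I_n) :
  3 * eps <= \sum_(rA : OmegaA P) pA rA * (hit x j rA)%:R.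
Proof.
case: wf => _ _ loc feas.
set S0 := Rg hN j (x j).
set f := fR R r b S0.
have bS0 : b \notin S0 by apply: b_Rg.
have adm := fR_adm R hr bS0.
have adm0 := fR_adm R hr (negbT (in_set0 b)).
have vi : forall x' : X, valid_input WA (VA x') [set b] f.
  by move=> x'; split; [apply: VA_WA | apply: VB_ok | apply: adm].
have aeq : forall (x' : X) (rA : OmegaA P), alice (VA x') f rA = alice (VA x') f0 rA.
  move=> x' rA; apply: loc => //; first by apply: VA_WA.
  by move=> T hT; apply: (fR_WA R r) => //; apply: b_WA.
have hT1 : S0 :|: [set b] \subset VA x :|: [set b] by apply: setSU; apply: (Rg_VAx hN x j).
have hT2 : (#|S0 :|: [set b]| <= r.+1)%N.
  by rewrite setUC cardsU1 (negbTE bS0) (card_Rg hN j (x j)).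
have opt := ag (vi x) hT1 hT2.
have fo : f (S0 :|: [set b]) = 1 := fR_opt R hr bS0 (card_Rg hN j (x j)).
rewrite fo mulr1 in opt.
have bound : expected_value P (VA x) [set b] f <=
   \sum_(rA : OmegaA P) \sum_(rB : OmegaB P) pA rA * pB rB * (2/3 + (hit x j rA)%:R / 3).
  apply: ler_sum => rA _; apply: ler_sum => rB _.
  have hA0 := pA_ge0 rA; have hB0 := pB_ge0 rB.
  case: (boolP (0 < pA rA)) => hA; last by rewrite (not_pos hA0 hA) !mul0r.
  case: (boolP (0 < pB rB)) => hB; last by rewrite (not_pos hB0 hB) mulr0 !mul0r.
  apply: ler_wpM2l; first by apply: mulr_ge0.
  case: (boolP (hit x j rA)) => hh.
    have e1 : ((true : nat)%:R : R) = 1 by [].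
    by have := fR_le1 R b hr S0 (bob_output (VA x) [set b] f rA rB); rewrite -/f e1; lra.
  move/forallPn: hh => [x']; rewrite negb_imply => /andP[/existsP[rA' /andP[hA' /eqP em]] hx'].
  have [sub1 card1] := feas _ _ _ _ _ (vi x) hA hB.
  have [sub2 _] := feas _ _ _ _ _ (vi x') hA' hB.
  have eout : bob_output (VA x') [set b] f rA' rB = bob_output (VA x) [set b] f rA rB.
    by rewrite /bob_output !aeq em.
  rewrite eout in sub2.
  have dis : [disjoint bob_output (VA x) [set b] f rA rB & S0].
    apply/pred0P=> e /=; apply/negbTE/negP=> /andP[he1 he2].
    move/subsetP: sub2 => /(_ e he1); rewrite inE => /orP[he3|].
      by move: hx'; rewrite (Rg_agree he2 he3) eqxx.
    by rewrite inE => /eqP eb; move: bS0; rewrite -eb he2.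
  have e0 : ((false : nat)%:R : R) = 0 by [].
  have := fR_alt R hr bS0 dis card1; rewrite -/f e0; lra.
have sumeq : \sum_(rA : OmegaA P) \sum_(rB : OmegaB P) pA rA * pB rB * (2/3 + (hit x j rA)%:R / 3)
   = 2/3 + (\sum_(rA : OmegaA P) pA rA * (hit x j rA)%:R) / 3.
  transitivity (\sum_(rA : OmegaA P) pA rA * (2/3 + (hit x j rA)%:R / 3)).
    apply: eq_bigr => rA _.
    rewrite -[RHS]mulr1 -pB_sum mulr_sumr; apply: eq_bigr => rB _; lra.
  transitivity (\sum_(rA : OmegaA P) (2/3 * pA rA + (pA rA * (hit x j rA)%:R) / 3)).
    by apply: eq_bigr => rA _; ring.
  by rewrite big_split /= -mulr_sumr pA_sum mulr1 -mulr_suml.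
rewrite sumeq in bound.
lra.
Qed.

Definition nhits (x : X) (rA : OmegaA P) : nat := #|[set j | hit x j rA]|.

Lemma claim2 (x : X) : exists rA, 0 < pA rA /\ 3 * eps * n%:R <= (nhits x rA)%:R.
Proof.
have S : 3 * eps * n%:R <= \sum_(rA : OmegaA P) pA rA * (nhits x rA)%:R.
  have -> : \sum_(rA : OmegaA P) pA rA * (nhits x rA)%:R =
            \sum_(j : 'I_n) \sum_(rA : OmegaA P) pA rA * (hit x j rA)%:R.
    rewrite exchange_big /=; apply: eq_bigr => rA _.
    rewrite /nhits -sum1_card natr_sum mulr_sumr big_mkcond /=.
    by apply: eq_bigr => j _; rewrite inE; case: (hit x j rA); rewrite ?mulr1 ?mulr0.
  apply: (@le_trans _ _ (\sum_(j : 'I_n) 3 * eps)).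
    by rewrite sumr_const card_ord mulr_natr.
  by apply: ler_sum => j _; apply: claim1.
case: (boolP [exists rA : OmegaA P, (0 < pA rA) && (3 * eps * n%:R <= (nhits x rA)%:R)]).
  by case/existsP=> rA /andP[h1 h2]; exists rA.
move/existsPn => H.
have [rA0 hA0] : exists rA0 : OmegaA P, 0 < pA rA0.
  case: (boolP [exists rA : OmegaA P, 0 < pA rA]); first by case/existsP=> rA h; exists rA.
  move/existsPn => H0.
  have : \sum_(rA : OmegaA P) pA rA <= 0.
    by apply: sumr_le0 => rA _; rewrite leNgt; apply: H0.
  by rewrite pA_sum; lra.
have : \sum_(rA : OmegaA P) pA rA * (nhits x rA)%:R < 3 * eps * n%:R.
  have E1 : 3 * eps * n%:R = \sum_(rA : OmegaA P) pA rA * (3 * eps * n%:R).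
    by rewrite -mulr_suml pA_sum mul1r.
  rewrite [X in _ < X]E1 (bigD1 rA0) //= [X in _ < X](bigD1 rA0) //=.
  apply: ltr_leD.
    rewrite ltr_pM2l //; rewrite ltNge; apply/negP => h; move: (H rA0) => /negP; apply; apply/andP; split; [exact: hA0 | exact: h].
  apply: ler_sum => rA _.
  case: (boolP (0 < pA rA)) => hp; last by rewrite (not_pos (pA_ge0 rA) hp) !mul0r.
  rewrite ler_pM2l //; apply: ltW; rewrite ltNge; apply/negP => h; move: (H rA) => /negP; apply; apply/andP; split; [exact: hp | exact: h].
lra.
Qed.

Lemma main_bound : 3 * eps * n%:R <= L%:R.
Proof.
have x0 : X := [ffun=> false].
have ex : forall x : X, exists rA : OmegaA P,
    (fun rA => (0 < pA rA) && (3 * eps * n%:R <= (nhits x rA)%:R)) rA.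
  by move=> x; case: (claim2 x) => rA [h1 h2]; exists rA; rewrite h1 h2.
pose sel (x : X) : OmegaA P := xchoose (ex x).
have selP : forall x, 0 < pA (sel x) /\ 3 * eps * n%:R <= (nhits x (sel x))%:R.
  by move=> x; have /andP[h1 h2] := xchooseP (ex x).
pose M (x : X) := alice (VA x) f0 (sel x).
pose H (x : X) := [set j | hit x j (sel x)].
pose xs := [arg min_(x < x0) #|H x|].
have hmin : forall x, (#|H xs| <= #|H x|)%N.
  by rewrite /xs; case: arg_minnP => // xm _ h x; apply: h.
have hM : forall x, (size (M x) <= L)%N.
  move=> x; apply: cm; [apply: VA_WA | apply: (fR_adm R hr (negbT (in_set0 b))) | by case: (selP x)].
have hF : forall x1 x2, M x1 = M x2 -> forall j, j \in H x1 -> x2 j = x1 j.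
  move=> x1 x2 e j; rewrite inE => /forallP /(_ x2) /implyP h.
  apply/eqP; apply: h; apply/existsP; exists (sel x2).
  by rewrite (proj1 (selP x2)) /=; apply/eqP; exact: (esym e).
have := count_bound hM hmin hF.
rewrite -(ler_nat R) => hL.
by apply: le_trans hL; case: (selP xs).
Qed.
End Main.
Local Open Scope ring_scope.
Lemma small_case (R : realType) (N k : nat) (P : protocol R N) (rho : R) (L : nat) :
  (0 < N)%N -> (1 <= k)%N -> 0 < rho ->
  protocol_wf k setT P -> approx_guarantee k setT P rho -> comm_at_most setT P L -> (1 <= L)%N.
Proof.
move=> hN hk hrho wf ag; case: L => [|L] cm; last by []; exfalso.
pose a : 'I_N := Ordinal hN.
pose f : {set 'I_N} -> R := fun S => (#|S|%:R).
have adm : admissible_f f.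
  split.
  - by move=> A; rewrite /f ler0n.
  - by move=> A B hAB; rewrite /f ler_nat subset_leq_card.
  - by move=> A B; rewrite /f -!natrD cardsUI.
case: wf => -[pA0 pA1] -[pB0 pB1] loc feas.
have msg : forall (VA : {set 'I_N}) (rA : OmegaA P), 0 < pA rA -> alice VA f rA = [::].
  move=> VA rA h; have := cm VA f rA (subsetT VA) adm h.
  by rewrite leqn0 => /nilP.
have [rA0 hA0] : exists rA0 : OmegaA P, 0 < pA rA0.
  case: (boolP [exists rA : OmegaA P, 0 < pA rA]); first by case/existsP=> rA h; exists rA.
  move/existsPn => H0.
  have : \sum_(rA : OmegaA P) pA rA <= 0.
    by apply: sumr_le0 => rA _; rewrite leNgt; apply: H0.
  by rewrite pA1; lra.
have vi0 : valid_input setT set0 set0 f by split; [apply: sub0set | apply: sub0set | exact: adm].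
have bob0 : forall rB : OmegaB P, 0 < pB rB -> bob set0 [::] f rB = set0.
  move=> rB hB; have [sub _] := feas _ _ _ _ _ vi0 hA0 hB.
  move: sub; rewrite /bob_output (msg _ _ hA0) setU0 => sub.
  by apply/eqP; rewrite -subset0.
have vi1 : valid_input setT [set a] set0 f by split; [apply: subsetT | apply: sub0set | exact: adm].
have hT1 : [set a] \subset [set a] :|: set0 by rewrite setU0.
have hT2 : (#|[set a]| <= k)%N by rewrite cards1.
have := ag _ _ _ vi1 _ hT1 hT2.
have -> : expected_value P [set a] set0 f = 0.
  apply: big1 => rA _; apply: big1 => rB _.
  case: (boolP (0 < pA rA)) => hA; last first.
    have -> : pA rA = 0 by apply/eqP; rewrite eq_le pA0 andbT leNgt.
    by rewrite !mul0r.
  case: (boolP (0 < pB rB)) => hB; last first.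
    have -> : pB rB = 0 by apply/eqP; rewrite eq_le pB0 andbT leNgt.
    by rewrite mulr0 mul0r.
  by rewrite /bob_output (msg _ _ hA) bob0 // /f cards0 mulr0.
by rewrite /f cards1 mulr1; lra.
Qed.
Theorem theorem2 (R : realType) :
  exists c : R, 0 < c /\
  forall eps : R, 0 < eps -> eps < 4^-1 ->
  forall k : nat, eps^-1 <= k%:R ->
  forall N : nat, exists WA : {set 'I_N},
  forall P : protocol R N,
    protocol_wf k WA P ->
    approx_guarantee k WA P (2 / 3 + eps) ->
    forall L : nat, comm_at_most WA P L ->
      c * (N%:R * eps / k%:R) <= L%:R.
Proof.
exists (1/2); split; first lra.
move=> eps he1 he2 k hk N.
have k4 : (4 < k)%N.
  have h1 : 1 <= eps * k%:R.
    by have := ler_wpM2l (ltW he1) hk; rewrite mulfV // gt_eqF.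
  have h2 : 4 * eps < 1 by lra.
  have : (4 : R) < k%:R by nra.
  by rewrite ltr_nat.
have kpos : (0 : R) < k%:R by rewrite ltr0n; lia.
set r := k.-1.
have ek : k = r.+1 by rewrite /r prednK //; lia.
have hr : (2 < r)%N by lia.
case: (leqP N (2 * r)) => hNr.
  exists setT => P wf ag L cm.
  case: (posnP N) => [N0|Npos].
    by rewrite N0 mul0r mul0r mulr0 ler0n.
  have L1 : (1 <= L)%N.
    apply: (small_case Npos _ _ wf ag cm); first lia; lra.
  have hL : (1 : R) <= L%:R by rewrite (_ : (1 : R) = 1%:R) // ler_nat.
  have hN2 : (N%:R : R) <= 2 * k%:R.
    by rewrite -natrM ler_nat; lia.
  have : N%:R * eps / k%:R <= 2 * eps.
    rewrite ler_pdivrMr //. nra.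
  lra.
have Npos : (0 < N)%N by lia.
pose b : 'I_N := Ordinal Npos.
set n := (N.-1 %/ (2 * r))%N.
have hn1 : (1 <= n)%N by rewrite /n divn_gt0; lia.
have hN : (2 * r * n < N)%N.
  have := leq_divM N.-1 (2 * r); rewrite -/n; lia.
have hN2 : (N <= 2 * r * n.+1)%N.
  have := ltn_pmod N.-1 (_ : 0 < 2 * r)%N; have := divn_eq N.-1 (2 * r); rewrite -/n.
  move=> e1 e2; first last; lia.
exists (~: [set b]) => P wf ag L cm.
rewrite ek in wf ag.
have hb : val b = 0%N by [].
have MB := main_bound hr hN hb wf ag cm.
have hN4 : (N%:R : R) <= 4 * k%:R * n%:R.
  rewrite -!natrM ler_nat; rewrite ek; nia.
have : N%:R * eps / k%:R <= 4 * n%:R * eps.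
  rewrite ler_pdivrMr //; nra.
have : (0 : R) <= n%:R by rewrite ler0n.
nra.
Qed.
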